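(* Let $T\in\mathcal{T}$ have $2r$ leaves and let $n\ge 2$. Then $\mathrm{gp}(T\boxtimes P_n)=4r=\omega((T\boxtimes P_n)_{\rm SR})$.
   Context: All graphs are finite and simple; $P_n$ is the path on $n$ vertices. The family $\mathcal{T}$ consists of the trees $T$ for which there is a sequence of trees $T_1,\dots,T_r$, $r\ge 1$, such that: $T_1$ is a path on at least three vertices; $T_2$ is obtained from $T_1$ by adding a (disjoint) path $P$ of order at least $3$ and joining by an edge a non-leaf vertex of $P$ with a non-leaf vertex of $T_1$; for each $i\in\{3,\dots,r\}$, $T_i$ is obtained from $T_{i-1}$ by adding a path $P$ of order at least $3$ and joining by an edge a non-leaf vertex of $P$ with a vertex of degree larger than two of $T_{i-1}$; and $T=T_r$. The strong product $G\boxtimes H$ has vertex set $V(G)\times V(H)$, with distinct $(g,h),(g',h')$ adjacent iff ($g=g'$ or $gg'\in E(G)$) and ($h=h'$ or $hh'\in E(H)$). For a connected graph $G$, a set $S\subseteq V(G)$ is a general position set if no three pairwise distinct vertices of $S$ lie on a common geodesic (shortest path); $\mathrm{gp}(G)$ is the maximum cardinality of a general position set. A vertex $u$ is maximally distant from $v$ if every neighbor $w$ of $u$ satisfies $d_G(v,w)\le d_G(u,v)$; $u,v$ are mutually maximally distant (MMD) if each is maximally distant from the other. The strong resolving graph $G_{\rm SR}$ has vertex set $V(G)$, distinct vertices adjacent iff MMD in $G$. $\omega$ is the clique number. *)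

(* Defs.v *)
From HB Require Import structures.
From mathcomp Require Import all_boot.
From mathcomp Require Import boolp.
Set Implicit Arguments. Unset Strict Implicit. Unset Printing Implicit Defensive.

Section Graphs.
Variable V : finType.
Variable e : rel V.

Definition simple_graph := symmetric e /\ irreflexive e.

(* distance: least length k of a walk from x to y (#|V| if none exists) *)
Definition walk_of_len (x y : V) (k : nat) : bool :=
  [exists p : k.-tuple V, path e x p && (last x p == y)].

Definition dist (x y : V) : nat := find (walk_of_len x y) (iota 0 #|V|).

Definition geodesic (x : V) (p : seq V) : Prop :=
  path e x p /\ uniq (x :: p) /\ size p = dist x (last x p).

Definition on_common_geodesic (u v w : V) : Prop :=
  exists x p, geodesic x p /\ u \in x :: p /\ v \in x :: p /\ w \in x :: p.

Definition gp_set (S : {set V}) : Prop :=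
  forall u v w, u \in S -> v \in S -> w \in S ->
    u != v -> v != w -> u != w -> ~ on_common_geodesic u v w.

Definition gp : nat := \max_(S : {set V} | `[< gp_set S >]) #|S|.

Definition clique (S : {set V}) : bool :=
  [forall x in S, forall y in S, (x != y) ==> e x y].

Definition omega : nat := \max_(S : {set V} | clique S) #|S|.

Definition max_distant (u v : V) : bool :=
  [forall w, e u w ==> (dist v w <= dist u v)].

Definition MMD (u v : V) : bool := max_distant u v && max_distant v u.

Definition SR_rel : rel V := fun u v => (u != v) && MMD u v.

Definition deg_in (S : {set V}) (x : V) : nat := #|[set y in S | e x y]|.

Definition leaves : {set V} := [set x | deg_in setT x == 1].

Definition induces_path (S : {set V}) : Prop :=
  exists s : seq V, uniq s /\ [set x in s] = S /\
    forall x y, x \in S -> y \in S ->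
      e x y = ((index x s).+1 == index y s) || ((index y s).+1 == index x s).

(* stage i S : the subgraph induced by S is the tree T_i of the construction *)
Inductive stage : nat -> {set V} -> Prop :=
| stage1 S : induces_path S -> 3 <= #|S| -> stage 1 S
| stageS i S P p v : stage i S -> induces_path P -> 3 <= #|P| ->
    [disjoint P & S] ->
    p \in P -> 2 <= deg_in P p ->
    v \in S -> (if i == 1 then 2 <= deg_in S v else 2 < deg_in S v) ->
    (forall x y, x \in P -> y \in S ->
       e x y = (x == p) && (y == v) /\ e y x = (x == p) && (y == v)) ->
    stage i.+1 (S :|: P).

Definition in_family_T : Prop := exists r, 1 <= r /\ stage r [set: V].

End Graphs.

Definition path_rel (n : nat) : rel 'I_n :=
  fun i j => (i.+1 == j :> nat) || (j.+1 == i :> nat).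

Definition strong_prod (A B : finType) (eA : rel A) (eB : rel B) : rel (A * B) :=
  fun x y => (x != y) && ((x.1 == y.1) || eA x.1 y.1) && ((x.2 == y.2) || eB x.2 y.2).

(* Main.v *)
Require Import Defs.
From mathcomp Require Import all_boot.
From mathcomp Require Import boolp.
From mathcomp Require Import zify.
Set Implicit Arguments. Unset Strict Implicit. Unset Printing Implicit Defensive.


Section GenDist.
Variables (W : finType) (E : rel W) (dl : W -> W -> nat).
Hypothesis dl0 : forall x, dl x x = 0.
Hypothesis dlLip : forall x x' y, E x x' -> dl x y <= (dl x' y).+1.
Hypothesis dlDesc : forall x y, x != y -> exists x', E x x' /\ (dl x' y).+1 = dl x y.

Lemma dl_eq0 x y : dl x y = 0 -> x = y.
Proof.
move=> H; apply/eqP; apply/negPn/negP => /dlDesc [x' [_ H']]; lia.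
Qed.

Lemma walk_le p x : path E x p -> dl x (last x p) <= size p.
Proof.
elim: p x => [|y p IH] x /=; first by rewrite dl0.
case/andP=> Hxy Hp; have := IH y Hp; have := dlLip (last y p) Hxy; lia.
Qed.

Lemma desc_walk m x y : dl x y = m -> exists p, [/\ size p = m, path E x p & last x p = y].
Proof.
elim: m x => [|m IH] x H.
  by exists [::]; split => //=; apply: dl_eq0.
have Hxy : x != y by apply/eqP => Exy; rewrite Exy dl0 in H.
have [x' [Ex Hx']] := dlDesc Hxy.
have [p [Hs Hp Hl]] := IH x' (ltac:(lia)).
by exists (x' :: p); split => /=; rewrite ?Hs ?Ex ?Hp.
Qed.

Lemma dl_tri x y z : dl x z <= dl x y + dl y z.
Proof.
have [p1 [Hs1 Hp1 Hl1]] := desc_walk (erefl (dl x y)).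
have [p2 [Hs2 Hp2 Hl2]] := desc_walk (erefl (dl y z)).
have H := @walk_le (p1 ++ p2) x.
rewrite cat_path Hp1 Hl1 Hp2 last_cat Hl1 Hl2 size_cat Hs1 Hs2 in H; exact: H.
Qed.

Lemma walk_sub z p x a b : path E x p -> a <= b -> b <= size p ->
  dl (nth z (x::p) a) (nth z (x::p) b) <= b - a.
Proof.
elim: p x a b => [|y p IH] x a b /=.
  move=> _ Hab Hb; have Hb0 : b = 0 by lia.
  have Ha0 : a = 0 by lia.
  by rewrite Hb0 Ha0 /= dl0.
case/andP=> Hxy Hp Hab Hb.
case: a Hab => [|a] Hab.
  case: b Hab Hb => [|b] Hab Hb; first by rewrite dl0.
  have := IH y 0 b Hp (leq0n _) Hb; rewrite /=.
  have := dlLip (nth z (y :: p) b) Hxy; lia.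
case: b Hab Hb => [|b] Hab Hb; first by [].
have := IH y a b Hp Hab Hb; rewrite /=; lia.
Qed.

Lemma tight_nth z p x : path E x p -> dl x (last x p) = size p ->
  forall a b, a <= b -> b <= size p -> dl (nth z (x::p) a) (nth z (x::p) b) = b - a.
Proof.
move=> Hp Ht a b Hab Hb.
have H1 := walk_sub z Hp Hab Hb.
have H2 := walk_sub z Hp (leq0n a) (leq_trans Hab Hb).
have H3 := walk_sub z Hp Hb (leqnn _).
have Hl : nth z (x :: p) (size p) = last x p by rewrite (last_nth z).
rewrite Hl /= in H3.
have T1 := dl_tri x (nth z (x :: p) a) (last x p).
have T2 := dl_tri (nth z (x :: p) a) (nth z (x :: p) b) (last x p).
rewrite /= in H2; lia.
Qed.

Lemma tight_uniq p x : path E x p -> dl x (last x p) = size p -> uniq (x::p).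
Proof.
move=> Hp Ht; apply/(uniqP x) => i j; rewrite !inE /= => Hi Hj Hij.
apply/eqP; rewrite eqn_leq; apply/andP; split; rewrite leqNgt; apply/negP => H.
  have := tight_nth x Hp Ht (ltnW H) (ltnSE Hi); rewrite Hij dl0; lia.
have := tight_nth x Hp Ht (ltnW H) (ltnSE Hj); rewrite Hij dl0; lia.
Qed.

Lemma walkP x y k : reflect (exists p, [/\ size p = k, path E x p & last x p = y])
  (walk_of_len E x y k).
Proof.
apply: (iffP existsP) => [[p /andP[Hp /eqP Hl]] | [p [Hs Hp Hl]]].
  by exists (val p); rewrite size_tuple.
have Hs' : size p == k by apply/eqP.
by exists (Tuple Hs'); rewrite /= Hp Hl eqxx.
Qed.

Lemma dist_dl x y : dist E x y = dl x y.
Proof.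
have [p [Hs Hp Hl]] := desc_walk (erefl (dl x y)).
have Hu : uniq (x :: p) by apply: tight_uniq Hp _; rewrite Hl Hs.
have Hlt : dl x y < #|W|.
  have := max_card (mem (x :: p)); move/card_uniqP: Hu => ->; rewrite /= Hs; lia.
have Hw : walk_of_len E x y (dl x y) by apply/walkP; exists p.
rewrite /dist.
set f := find _ _.
have Hf : f <= dl x y.
  rewrite leqNgt; apply/negP => H.
  have := before_find 0 H; rewrite nth_iota // add0n Hw //.
have Hf' : f < size (iota 0 #|W|) by rewrite size_iota; lia.
have Hh : has (walk_of_len E x y) (iota 0 #|W|) by rewrite has_find.
have := nth_find 0 Hh; rewrite -/f.
rewrite nth_iota ?add0n; last by rewrite size_iota in Hf'.
case/walkP => q [Hqs Hqp Hql].
have := walk_le Hqp; rewrite Hql Hqs; lia.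
Qed.

Definition btw x y z := dl x y + dl y z = dl x z.

Lemma btw_geod u v w : btw u v w -> on_common_geodesic E u v w.
Proof.
move=> Hb.
have [p1 [Hs1 Hp1 Hl1]] := desc_walk (erefl (dl u v)).
have [p2 [Hs2 Hp2 Hl2]] := desc_walk (erefl (dl v w)).
have Hp : path E u (p1 ++ p2) by rewrite cat_path Hp1 Hl1 Hp2.
have Hl : last u (p1 ++ p2) = w by rewrite last_cat Hl1 Hl2.
have Hs : size (p1 ++ p2) = dl u w by rewrite size_cat Hs1 Hs2.
exists u, (p1 ++ p2); split; last split; last split.
- split => //; split; first by apply: tight_uniq Hp _; rewrite Hl Hs.
  by rewrite Hl dist_dl Hs.
- by rewrite inE eqxx.
- by rewrite -cat_cons mem_cat -Hl1 mem_last.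
- by rewrite -Hl mem_last.
Qed.

Hypothesis dlsym : forall x y, dl x y = dl y x.

Lemma geod_btw u v w : u != v -> v != w -> u != w -> on_common_geodesic E u v w ->
  [\/ btw u v w, btw v u w | btw u w v].
Proof.
move=> Huv Hvw Huw [x [p [[Hp [Hu Hs]] [Hxu [Hxv Hxw]]]]].
rewrite dist_dl in Hs.
have key : forall a b c, a <= b -> b <= c -> c <= size p ->
   btw (nth x (x::p) a) (nth x (x::p) b) (nth x (x::p) c).
  move=> a b c Hab Hbc Hc; rewrite /btw.
  rewrite !(tight_nth x Hp (esym Hs)) //; try lia.
set q := x :: p in Hxu Hxv Hxw key.
have Eu := nth_index x Hxu; have Ev := nth_index x Hxv; have Ew := nth_index x Hxw.
have Su : index u q <= size p by rewrite -ltnS; rewrite index_mem.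
have Sv : index v q <= size p by rewrite -ltnS; rewrite index_mem.
have Sw : index w q <= size p by rewrite -ltnS; rewrite index_mem.
have bsym : forall a b c, btw a b c -> btw c b a by move=> a b c; rewrite /btw; rewrite !(dlsym c) (dlsym b a); lia.
case: (leqP (index u q) (index v q)) => H1; case: (leqP (index v q) (index w q)) => H2;
  case: (leqP (index u q) (index w q)) => H3.
- by have := key _ _ _ H1 H2 Sw; rewrite Eu Ev Ew => H; constructor 1.
- lia.
- by have := key _ _ _ H3 (ltnW H2) Sv; rewrite Eu Ev Ew => H; constructor 3.
- by have := key _ _ _ (ltnW H3) H1 Sv; rewrite Eu Ev Ew => H; constructor 2; apply: bsym.
- by have := key _ _ _ (ltnW H1) H3 Sw; rewrite Eu Ev Ew => H; constructor 2.
- by have := key _ _ _ H2 (ltnW H3) Su; rewrite Eu Ev Ew => H; constructor 3; apply: bsym.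
- lia.
- by have := key _ _ _ (ltnW H2) (ltnW H1) Su; rewrite Eu Ev Ew => H; constructor 1; apply: bsym.
Qed.

End GenDist.


Definition dd (i j : nat) := (i - j) + (j - i).

Ltac clia := repeat match goal with
 | H : forall _, _ |- _ => clear H
 | H : is_true (_ \in _) |- _ => clear H
 | H : @eq {set _} _ _ |- _ => clear H
 | H : is_true [disjoint _ & _] |- _ => clear H
 | H : is_true (uniq _) |- _ => clear H
 | H : @eq bool _ _ |- _ => clear H
 | H : is_true (_ != _) |- _ => clear H
 end; lia.

Section Tree.
Variables (V : finType) (e : rel V).

Definition TM (S : {set V}) (D : V -> V -> nat) : Prop :=
  [/\ (forall x, x \in S -> D x x = 0),
      (forall x y, x \in S -> y \in S -> D x y = D y x),
      (forall x x' y, x \in S -> x' \in S -> y \in S -> e x x' ->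
          D x' y = (D x y).+1 \/ D x y = (D x' y).+1),
      (forall x y, x \in S -> y \in S -> x != y ->
          exists x', [/\ x' \in S, e x x' & (D x' y).+1 = D x y]) &
      (forall x x1 x2 y, x \in S -> x1 \in S -> x2 \in S -> y \in S -> e x x1 -> e x x2 ->
          (D x1 y).+1 = D x y -> (D x2 y).+1 = D x y -> x1 = x2)].

Section PathS.
Variables (P : {set V}) (s : seq V).
Hypotheses (Hu : uniq s) (HP : [set x in s] = P)
  (He : forall x y, x \in P -> y \in P ->
     e x y = ((index x s).+1 == index y s) || ((index y s).+1 == index x s)).

Lemma inPs x : (x \in P) = (x \in s).
Proof using Hu HP He. by rewrite -HP inE. Qed.

Lemma idx_lt x : x \in P -> index x s < size s.
Proof using Hu HP He. by rewrite index_mem -inPs. Qed.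

Lemma idx_inj x y : x \in P -> y \in P -> index x s = index y s -> x = y.
Proof using Hu HP He.
move=> Hx Hy H; rewrite inPs in Hx; rewrite inPs in Hy.
by rewrite -(nth_index x Hx) H nth_index.
Qed.

Lemma pD1 x x' : x \in P -> x' \in P -> e x x' ->
  index x' s = (index x s).+1 \/ index x s = (index x' s).+1.
Proof using Hu HP He. by move=> Hx Hx'; rewrite He //; case/orP => /eqP H; [left|right]. Qed.

Lemma pD3 x x1 x2 k : x \in P -> x1 \in P -> x2 \in P -> e x x1 -> e x x2 ->
  (dd (index x1 s) k).+1 = dd (index x s) k -> (dd (index x2 s) k).+1 = dd (index x s) k ->
  x1 = x2.
Proof using Hu HP He.
move=> Hx H1 H2 E1 E2 F1 F2; apply: idx_inj => //.
have := pD1 Hx H1 E1; have := pD1 Hx H2 E2; rewrite /dd in F1 F2; clia.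
Qed.

Lemma pstep x k : x \in P -> k < size s -> index x s != k ->
  exists x', [/\ x' \in P, e x x' & (dd (index x' s) k).+1 = dd (index x s) k].
Proof using Hu HP He.
move=> Hx Hk Hne; have Hxl := idx_lt Hx.
case: (ltnP (index x s) k) => Hlt.
  have Hs : (index x s).+1 < size s by clia.
  exists (nth x s (index x s).+1).
  have Hm : nth x s (index x s).+1 \in P by rewrite inPs mem_nth.
  rewrite He // index_uniq //; split => //; rewrite ?eqxx //; rewrite /dd; clia.
have Hs : (index x s).-1 < size s by clia.
exists (nth x s (index x s).-1).
have Hm : nth x s (index x s).-1 \in P by rewrite inPs mem_nth.
rewrite He // index_uniq //; split => //.
  apply/orP; right; apply/eqP; move/eqP: Hne; clia.
move/eqP: Hne; rewrite /dd; clia.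
Qed.

End PathS.

Lemma stage1_TM S : induces_path e S -> exists D, TM S D.
Proof.
case=> s [Hu [HP He]].
exists (fun x y => dd (index x s) (index y s)); split.
- by move=> x _; rewrite /dd; clia.
- by move=> x y _ _; rewrite /dd; clia.
- move=> x x' y Hx Hx' _ E; have := pD1 Hu HP He Hx Hx' E; rewrite /dd; clia.
- move=> x y Hx Hy Hne.
  apply: (pstep Hu HP He Hx (idx_lt Hu HP He Hy)).
  by apply/eqP => H; move/eqP: Hne; apply; apply: (idx_inj Hu HP He Hx Hy H).
- move=> x x1 x2 y Hx H1 H2 _ E1 E2 /= F1 F2; exact: (pD3 Hu HP He (k := index y s) Hx H1 H2 E1 E2 F1 F2).
Qed.

Definition Dext (S : {set V}) (s : seq V) (p v : V) (D : V -> V -> nat) x y :=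
  if x \in S then (if y \in S then D x y else (D x v + dd (index p s) (index y s)).+1)
  else (if y \in S then (dd (index x s) (index p s) + D v y).+1 else dd (index x s) (index y s)).

Lemma stageS_TM S P p v D : TM S D -> induces_path e P -> [disjoint P & S] ->
  p \in P -> v \in S ->
  (forall x y, x \in P -> y \in S ->
       e x y = (x == p) && (y == v) /\ e y x = (x == p) && (y == v)) ->
  exists D', TM (S :|: P) D'.
Proof.
move=> [D0 Dsym D1 D2 D3] [s [Hu [HP He]]] Hdis Hp Hv Hc.
have HpS : p \in S = false by apply: disjointFr Hdis Hp.
have PS : forall x, x \in P -> x \in S = false by move=> x Hx; apply: disjointFr Hdis Hx.
have Hipl : index p s < size s by exact: (idx_lt Hu HP He Hp).
have Evp : e v p by rewrite (Hc p v Hp Hv).2 !eqxx.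
have Epv : e p v by rewrite (Hc p v Hp Hv).1 !eqxx.
have nbS : forall x z, x \in S -> z \in S :|: P -> e x z -> z \in S \/ [/\ z = p, x = v & z \in P].
  move=> x z Hx; case/setUP => Hz E; first by left.
  by right; move: E; rewrite (Hc z x Hz Hx).2 => /andP[/eqP -> /eqP ->].
have nbP : forall x z, x \in P -> z \in S :|: P -> e x z -> z \in P \/ [/\ z = v, x = p & z \in S].
  move=> x z Hx; case/setUP => Hz E; last by left.
  by right; move: E; rewrite (Hc x z Hx Hz).1 => /andP[/eqP -> /eqP ->].
have memSP : forall z, z \in S :|: P -> z \in S \/ (z \in P /\ z \in S = false).
  move=> z; case/setUP => Hz; [by left | by right; split => //; apply: PS].
exists (Dext S s p v D); split.
- move=> x /memSP [Hx | [HxP Hx]]; rewrite /Dext Hx; [exact: D0 | rewrite /dd; clia].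
- move=> x y /memSP [Hx | [HxP Hx]] /memSP [Hy | [HyP Hy]]; rewrite /Dext Hx Hy.
  + exact: Dsym.
  + rewrite Dsym // /dd; clia.
  + rewrite Dsym // /dd; clia.
  + rewrite /dd; clia.
- move=> x x' y Hx0 Hx'0 Hy0 E.
  case/memSP: (Hx0) => [Hx | [HxP Hx]].
  + case: (nbS x x' Hx Hx'0 E) => [Hx' | [Ex' Ex HpP]].
    * case/memSP: Hy0 => [Hy | [HyP Hy]]; rewrite /Dext Hx Hx' Hy; first exact: D1.
      have := D1 x x' v Hx Hx' Hv E; clia.
    * rewrite Ex' Ex; case/memSP: Hy0 => [Hy | [HyP Hy]]; rewrite /Dext Hv HpS Hy ?(D0 v Hv) /dd; clia.
  + case: (nbP x x' HxP Hx'0 E) => [Hx'P | [Ex' Ex HvS]].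
    * have Hx' := PS x' Hx'P; have := pD1 Hu HP He HxP Hx'P E.
      case/memSP: Hy0 => [Hy | [HyP Hy]]; rewrite /Dext Hx Hx' Hy /dd; clia.
    * rewrite Ex' Ex; case/memSP: Hy0 => [Hy | [HyP Hy]]; rewrite /Dext Hv HpS Hy ?(D0 v Hv) /dd; clia.
- move=> x y /memSP [Hx | [HxP Hx]] /memSP [Hy | [HyP Hy]] Hne.
  + have [x' [Hx' E H]] := D2 x y Hx Hy Hne.
    by exists x'; rewrite /Dext Hx Hx' Hy inE Hx'.
  + case: (eqVneq x v) => [Exv | Hxv].
      exists p; rewrite Exv /Dext Hv HpS Hy inE Hp orbT (D0 v Hv) Evp; split => //; clia.
    have [x' [Hx' E H]] := D2 x v Hx Hv Hxv.
    exists x'; rewrite /Dext Hx Hx' Hy inE Hx'; split => //; clia.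
  + case: (eqVneq x p) => [Exp | Hxp].
      exists v; rewrite Exp /Dext Hv HpS Hy inE Hv Epv; split => //; rewrite /dd; clia.
    have Hne' : index x s != index p s.
      by apply/eqP => H; move/eqP: Hxp; apply; apply: (idx_inj Hu HP He HxP Hp H).
    have [x' [Hx'P E H]] := pstep Hu HP He HxP Hipl Hne'.
    exists x'; rewrite /Dext Hx (PS x' Hx'P) Hy inE Hx'P orbT; split => //; clia.
  + have Hne' : index x s != index y s.
      by apply/eqP => H; move/eqP: Hne; apply; apply: (idx_inj Hu HP He HxP HyP H).
    have [x' [Hx'P E H]] := pstep Hu HP He HxP (idx_lt Hu HP He HyP) Hne'.
    exists x'; rewrite /Dext Hx (PS x' Hx'P) Hy inE Hx'P orbT; split => //; clia.
- move=> x x1 x2 y Hx0 H10 H20 Hy0 E1 E2 F1 F2.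
  case/memSP: (Hx0) => [Hx | [HxP Hx]].
  + case: (nbS x x1 Hx H10 E1) => [H1 | [Ex1 Exv H1P]];
    case: (nbS x x2 Hx H20 E2) => [H2 | [Ex2 Exv' H2P]].
    * case/memSP: Hy0 => [Hy | [HyP Hy]]; move: F1 F2; rewrite /Dext Hx H1 H2 Hy => F1 F2.
        exact: (D3 x x1 x2 y).
      apply: (D3 x x1 x2 v) => //; clia.
    * move: F1 F2; rewrite Ex2 Exv'; case/memSP: Hy0 => [Hy|[HyP Hy]];
        rewrite /Dext Hv HpS H1 Hy ?(D0 v Hv) /dd => F1 F2; exfalso; clia.
    * move: F1 F2; rewrite Ex1 Exv; case/memSP: Hy0 => [Hy|[HyP Hy]];
        rewrite /Dext Hv HpS H2 Hy ?(D0 v Hv) /dd => F1 F2; exfalso; clia.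
    * by rewrite Ex1 Ex2.
  + case: (nbP x x1 HxP H10 E1) => [H1P | [Ex1 Exp H1S]];
    case: (nbP x x2 HxP H20 E2) => [H2P | [Ex2 Exp' H2S]].
    * have H1 := PS x1 H1P; have H2 := PS x2 H2P.
      case/memSP: Hy0 => [Hy | [HyP Hy]]; move: F1 F2; rewrite /Dext Hx H1 H2 Hy => F1 F2.
        apply: (pD3 Hu HP He (k := index p s) HxP H1P H2P E1 E2); clia.
      exact: (pD3 Hu HP He HxP H1P H2P E1 E2 F1 F2).
    * have H1 := PS x1 H1P.
      move: F1 F2; rewrite Ex2 Exp'; case/memSP: Hy0 => [Hy|[HyP Hy]];
        rewrite /Dext Hv HpS H1 Hy ?(D0 v Hv) /dd => F1 F2; exfalso; clia.
    * have H2 := PS x2 H2P.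
      move: F1 F2; rewrite Ex1 Exp; case/memSP: Hy0 => [Hy|[HyP Hy]];
        rewrite /Dext Hv HpS H2 Hy ?(D0 v Hv) /dd => F1 F2; exfalso; clia.
    * by rewrite Ex1 Ex2.
Qed.

Lemma stage_TM i S : stage e i S -> exists D, TM S D.
Proof.
elim=> [S0 Hp _ | i0 S0 P p v _ [D HD] HP _ Hdis Hp _ Hv _ Hc].
  exact: stage1_TM.
exact: stageS_TM HD HP Hdis Hp Hv Hc.
Qed.

Lemma stage_card i S : stage e i S -> 2 < #|S|.
Proof.
elim=> [S0 _ H | i0 S0 P p v _ IH _ _ _ _ _ _ _ _].
  exact: H.
apply: leq_trans IH _; apply: subset_leq_card; exact: subsetUl.
Qed.

End Tree.


Section TreeFacts.
Variables (V : finType) (e : rel V) (D : V -> V -> nat).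
Hypothesis esymm : symmetric e.
Hypothesis HTM : TM e setT D.
Hypothesis Hcard : 1 < #|V|.

Lemma T0 x : D x x = 0.
Proof. by case: HTM => H _ _ _ _; apply: H; rewrite inE. Qed.
Lemma Ts x y : D x y = D y x.
Proof. by case: HTM => _ H _ _ _; apply: H; rewrite inE. Qed.
Lemma T1 x x' y : e x x' -> D x' y = (D x y).+1 \/ D x y = (D x' y).+1.
Proof. by case: HTM => _ _ H _ _; apply: H; rewrite inE. Qed.
Lemma T2 x y : x != y -> exists x', e x x' /\ (D x' y).+1 = D x y.
Proof.
case: HTM => _ _ _ H _ Hne; have [x' [_ E F]] := H x y (in_setT _) (in_setT _) Hne.
by exists x'.
Qed.
Lemma T3 x x1 x2 y : e x x1 -> e x x2 -> (D x1 y).+1 = D x y -> (D x2 y).+1 = D x y -> x1 = x2.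
Proof. by case: HTM => _ _ _ _ H; apply: H; rewrite inE. Qed.

Lemma TLip x x' y : e x x' -> D x y <= (D x' y).+1.
Proof. by move/T1 => /(_ y); lia. Qed.

Lemma Ttri x y z : D x z <= D x y + D y z.
Proof. exact: (dl_tri T0 TLip T2). Qed.

Lemma Teq0 x y : D x y = 0 -> x = y.
Proof. exact: (dl_eq0 T2). Qed.

Lemma nbr x : exists x', e x x'.
Proof.
have [y Hy] : exists y, y != x.
  move/card_gt1P: Hcard => [a [b [_ _ Hab]]].
  case: (eqVneq a x) => [Ea|Ha]; last by exists a.
  by exists b; rewrite -Ea eq_sym.
have Hxy : x != y by rewrite eq_sym.
have [x' [E _]] := T2 Hxy.
by exists x'.
Qed.

Lemma leaf_uniq x y1 y2 : x \in leaves e -> e x y1 -> e x y2 -> y1 = y2.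
Proof.
rewrite /leaves inE /deg_in => /cards1P [z Hz] E1 E2.
have : y1 \in [set y in [set: V] | e x y] by rewrite !inE E1.
have : y2 \in [set y in [set: V] | e x y] by rewrite !inE E2.
by rewrite Hz !inE => /eqP -> /eqP ->.
Qed.

Lemma nonleaf2 x y : x \notin leaves e -> e x y -> exists y2, e x y2 /\ y2 != y.
Proof.
rewrite /leaves inE /deg_in => Hn E.
have Hy : y \in [set z in [set: V] | e x z] by rewrite !inE E.
have Hgt : 1 < #|[set z in [set: V] | e x z]|.
  have : 0 < #|[set z in [set: V] | e x z]| by apply/card_gt0P; exists y.
  by move: Hn; case: (#|_|) => [|[|k]].
move/card_gt1P: Hgt => [a [b [Ha Hb Hab]]].
rewrite !inE in Ha Hb.
case: (eqVneq a y) => [Ea|Hay]; last by exists a.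
by exists b; split => //; rewrite -Ea eq_sym.
Qed.

Lemma branch m : forall t s1 s2 x1 x2, D t s1 = m.+1 -> e t x1 -> (D x1 s1).+1 = D t s1 ->
  e t x2 -> (D x2 s2).+1 = D t s2 -> x1 != x2 -> D s1 s2 = D s1 t + D t s2.
Proof.
elim: m => [|m IH] t s1 s2 x1 x2 Hm E1 F1 E2 F2 Hne.
all: have G : D x1 s2 = (D t s2).+1 by
  case: (T1 s2 E1) => // H; exfalso; apply: (negP Hne); apply/eqP; apply: (T3 (y := s2) E1 E2) => //; rewrite H.
- have Hx1 : x1 = s1 by apply: Teq0; lia.
  subst s1; rewrite G (Ts x1 t) Hm; lia.
- have Hx1 : x1 != s1 by apply/eqP => H; rewrite H T0 in F1; lia.
  have [z [Ez Fz]] := T2 Hx1.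
  have Et : e x1 t by rewrite esymm.
  have Hzt : z != t by apply/eqP => H; rewrite H in Fz; lia.
  have := IH x1 s1 s2 z t (ltac:(lia)) Ez Fz Et (esym G) Hzt.
  rewrite (Ts s1 x1) (Ts s1 t) G; lia.
Qed.

Lemma branch' t s1 s2 x1 x2 : e t x1 -> (D x1 s1).+1 = D t s1 ->
  e t x2 -> (D x2 s2).+1 = D t s2 -> x1 != x2 -> D s1 s2 = D s1 t + D t s2.
Proof.
move=> E1 F1; have [m Hm] : exists m, D t s1 = m.+1 by exists (D x1 s1); rewrite F1.
exact: (branch Hm E1 F1).
Qed.

Lemma leaf_dir t x : e t x -> exists l, l \in leaves e /\ (D x l).+1 = D t l.
Proof.
move=> Etx.
pose P := fun z => (D x z).+1 == D t z.
have Px : P x.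
  rewrite /P T0; apply/eqP; case: (T1 x Etx); rewrite T0 //; lia.
case: (arg_maxnP (fun z => D t z) Px) => l /eqP Pl Hmax.
exists l; split => //.
have Hlt : l != t by apply/eqP => H; rewrite H T0 in Pl.
have [y0 [Ey0 Fy0]] := T2 Hlt.
rewrite /leaves inE /deg_in; apply/cards1P; exists y0; apply/setP => y; rewrite !inE.
apply/idP/eqP => [Ely | ->]; last by [].
case: (T1 t Ely) => Hy; last by apply: (T3 (y := t) Ely Ey0) => //; rewrite Hy.
exfalso.
have Ely' : e y l by rewrite esymm.
have s1 := Ts x y; have s2 := Ts t y; have s3 := Ts t l; have s4 := Ts x l.
have Py : P y.
  apply/eqP; have h1 := TLip x Ely'; have h2 := Ttri t x y.
  have h3 : D t x = 1 by move/eqP: Px; rewrite T0 => <-.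
  lia.
have := Hmax y Py; lia.
Qed.

Lemma Timp_of t s : (t \notin leaves e) \/ t = s -> exists t', e t t' /\ D t' s = (D t s).+1.
Proof.
case: (eqVneq t s) => [-> _ | Hts].
  have [x Ex] := nbr s; exists x; split => //; case: (T1 s Ex); rewrite T0 //; lia.
case => [Hl | Ets]; last by rewrite Ets eqxx in Hts.
have [x0 [E0 F0]] := T2 Hts.
have [x1 [E1 H1]] := nonleaf2 Hl E0.
exists x1; split => //; case: (T1 s E1) => // H.
exfalso; apply: (negP H1); apply/eqP; apply: (T3 (y := s) E1 E0) => //; rewrite H.
Qed.

Lemma leaf_closer l s y : l \in leaves e -> l != s -> e l y -> (D y s).+1 = D l s.
Proof.
move=> Hl Hls Ely; have [x [Ex Fx]] := T2 Hls.
by rewrite (leaf_uniq Hl Ely Ex).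
Qed.

Lemma leaf_strict l1 l2 l3 : l2 \in leaves e -> l2 != l1 -> l2 != l3 ->
  (D l1 l3).+2 <= D l1 l2 + D l2 l3.
Proof.
move=> Hl H1 H3.
have [y [Ey Fy]] := T2 H1.
have G := leaf_closer Hl H3 Ey.
have := Ttri l1 y l3; rewrite (Ts l1 y) (Ts l1 l2); lia.
Qed.

Lemma leaf_exists : exists l, l \in leaves e.
Proof.
have [y0 _] : exists y : V, True by move/card_gt1P: Hcard => [a _]; exists a.
have [x Ex] := nbr y0; have [l [Hl _]] := leaf_dir Ex; by exists l.
Qed.

End TreeFacts.


Ltac plia := repeat match goal with
 | H := _ |- _ => clear H
 | H : forall _, _ |- _ => clear H
 | H : is_true (_ \in _) |- _ => clear H
 | H : is_true (_ != _) |- _ => clear H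
 | H : @eq bool _ _ |- _ => clear H
 | H : @eq (_ * _) _ _ |- _ => clear H
 end; lia.

Section Prod.
Variables (V : finType) (e : rel V) (D : V -> V -> nat) (n : nat).
Hypothesis esymm : symmetric e.
Hypothesis HTM : TM e setT D.
Hypothesis Hcard : 1 < #|V|.
Hypothesis Hn : 1 < n.

Local Notation E := (strong_prod e (@path_rel n)).

Definition dP (u w : V * 'I_n) := maxn (D u.1 w.1) (dd u.2 w.2).

Lemma ord_neq (i j : 'I_n) : i != j -> (i : nat) != j.
Proof. by apply: contra => /eqP H; apply/eqP; apply: ord_inj. Qed.

Lemma path_rel_neq (i i' : 'I_n) : path_rel i i' -> (i : nat) != i'.
Proof. by rewrite /path_rel => /orP [/eqP H | /eqP H]; apply/eqP; plia. Qed.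

Lemma Eprod t t' (i i' : 'I_n) : (t == t') || e t t' -> (i == i') || path_rel i i' ->
  (t != t') || (i != i') -> E (t, i) (t', i').
Proof. by move=> H1 H2 H3; rewrite /strong_prod /= xpair_eqE negb_and H3 H1 H2. Qed.

Lemma pstepI (i j : 'I_n) : i != j -> exists i' : 'I_n, path_rel i i' /\ (dd i' j).+1 = dd i j.
Proof.
move=> /ord_neq Hij; case: (ltngtP i j) => H.
- have Hi : i.+1 < n by have := ltn_ord j; plia.
  exists (Ordinal Hi); rewrite /path_rel /= eqxx /dd; split => //; plia.
- have Hi : i.-1 < n by have := ltn_ord i; plia.
  exists (Ordinal Hi); rewrite /path_rel /=; split.
    by apply/orP; right; apply/eqP; plia.
  rewrite /dd /=; plia.
- by rewrite H eqxx in Hij.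
Qed.

Lemma dP0 u : dP u u = 0.
Proof. by rewrite /dP (T0 HTM) /dd; plia. Qed.

Lemma dPsym u w : dP u w = dP w u.
Proof. by rewrite /dP (Ts HTM u.1) /dd; plia. Qed.

Lemma dPLip u u' w : E u u' -> dP u w <= (dP u' w).+1.
Proof.
case: u => t i; case: u' => t' i'; case: w => s j.
rewrite /strong_prod /= => /andP [/andP [_ H1] H2].
have A : D t s <= (D t' s).+1.
  by case/orP: H1 => [/eqP -> | Ht]; [lia | exact: (TLip HTM Hcard)].
have B : dd i j <= (dd i' j).+1.
  case/orP: H2 => [/eqP -> | H2]; first by rewrite /dd; plia.
  by move: H2; rewrite /path_rel /dd => /orP [/eqP | /eqP]; plia.
rewrite /dP /=; plia.
Qed.

Lemma dPDesc u w : u != w -> exists u', E u u' /\ (dP u' w).+1 = dP u w.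
Proof.
case: u => t i; case: w => s j; rewrite xpair_eqE negb_and => Hne.
rewrite /dP /=.
have Tm : t != s -> exists t', e t t' /\ (D t' s).+1 = D t s by apply: (T2 HTM).
have tne : forall t', (D t' s).+1 = D t s -> (t != t') by move=> t' F; apply/eqP => H; rewrite H in F; plia.
case: (ltngtP (D t s) (dd i j)) => Hc.
- have Hij : i != j by apply/eqP => H; rewrite H /dd in Hc; plia.
  have [i' [Hp Fi]] := pstepI Hij.
  exists (t, i'); split => /=; last plia.
  apply: Eprod; [by rewrite eqxx | by rewrite Hp orbT | apply/orP; right].
  by apply/eqP => H; move: (path_rel_neq Hp); rewrite H eqxx.
- have Hts : t != s by apply/eqP => H; rewrite H (T0 HTM) in Hc.
  have [t' [Et Ft]] := Tm Hts.
  exists (t', i); split => /=; last plia.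
  by apply: Eprod; rewrite ?eqxx ?Et ?orbT // (tne _ Ft).
- have Hts : t != s.
    apply/eqP => H; rewrite H (T0 HTM) in Hc.
    case/orP: Hne => /eqP; first by rewrite H.
    by case; apply: ord_inj; move: Hc; rewrite /dd; plia.
  have Hij : i != j.
    apply/eqP => H; rewrite H /dd in Hc; have Hc0 : D t s = 0 by plia.
    by move/eqP: Hts; case; apply: (Teq0 HTM).
  have [t' [Et Ft]] := Tm Hts.
  have [i' [Hp Fi]] := pstepI Hij.
  exists (t', i'); split => /=; last plia.
  by apply: Eprod; rewrite ?Et ?Hp ?orbT // (tne _ Ft).
Qed.

Lemma dist_E u w : dist E u w = dP u w.
Proof. exact: (dist_dl dP0 dPLip dPDesc). Qed.


Definition bdry (i : 'I_n) := ((i : nat) == 0) || ((i : nat) == n.-1).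
Definition Cor := [set u : V * 'I_n | (u.1 \in leaves e) && bdry u.2].

Lemma CorP x : (x \in Cor) = (x.1 \in leaves e) && bdry x.2.
Proof. by rewrite /Cor in_set. Qed.

Lemma bdryP (i : 'I_n) : bdry i -> (i : nat) = 0 \/ (i : nat) = n.-1.
Proof. by case/orP => /eqP H; [left|right]. Qed.

Lemma Dpos t s : t != s -> 0 < D t s.
Proof. move=> H; rewrite lt0n; apply/eqP => H0; move/eqP: H; apply; exact: (Teq0 HTM). Qed.

Lemma corner_nbtw u v w : u \in Cor -> v \in Cor -> w \in Cor -> u != v -> v != w -> u != w ->
  ~ btw dP u v w.
Proof.
case: u => l1 i1; case: v => l2 i2; case: w => l3 i3.
rewrite !CorP /= => /andP [L1 /bdryP B1] /andP [L2 /bdryP B2] /andP [L3 /bdryP B3].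
rewrite !xpair_eqE !negb_and => N12 N23 N13.
rewrite /btw /dP /= /dd.
have o1 := ltn_ord i1; have o2 := ltn_ord i2; have o3 := ltn_ord i3.
case: (eqVneq l2 l1) => [E21 | H21].
  subst l2; rewrite (T0 HTM).
  have Hi : (i1 : nat) != i2 by case/orP: N12 => [|/ord_neq]; rewrite ?eqxx.
  have Hv : 0 < D l1 l3 \/ (i2 : nat) != i3.
    by case/orP: N23 => [/Dpos|/ord_neq]; [left|right].
  move/eqP: Hi => Hi; case: Hv => [Hv | /eqP Hv]; plia.
case: (eqVneq l2 l3) => [E23 | H23].
  subst l3; rewrite (T0 HTM) (Ts HTM l1 l2).
  have Hi : (i2 : nat) != i3 by case/orP: N23 => [|/ord_neq]; rewrite ?eqxx.
  have Hv : 0 < D l2 l1 \/ (i1 : nat) != i2.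
    by case/orP: N12 => [H|/ord_neq]; [left; apply: Dpos; rewrite eq_sym | right].
  move/eqP: Hi => Hi; case: Hv => [Hv | /eqP Hv]; plia.
have S := leaf_strict HTM Hcard L2 H21 H23.
have P1 := Dpos H21; have P3 := Dpos H23.
rewrite (Ts HTM l2 l1) in P1.
plia.
Qed.

Lemma corner_gp : gp_set (strong_prod e (@path_rel n)) Cor.
Proof.
move=> u v w Hu Hv Hw H1 H2 H3 Hg.
case: (geod_btw dP0 dPLip dPDesc dPsym H1 H2 H3 Hg) => Hb.
- exact: (corner_nbtw Hu Hv Hw H1 H2 H3 Hb).
- by apply: (corner_nbtw Hv Hu Hw _ H3 H2 Hb); rewrite eq_sym.
- by apply: (corner_nbtw Hu Hw Hv H3 _ H1 Hb); rewrite eq_sym.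
Qed.

Lemma corner_maxd u v : u \in Cor -> v \in Cor -> u != v -> max_distant E u v.
Proof.
move=> Hu Hv Huv; apply/forallP => w; apply/implyP => Euw; rewrite !dist_E.
move: Hu Hv Huv Euw; case: u => l i; case: v => l' j; case: w => t' i'.
rewrite !CorP /= => /andP [L /bdryP B] /andP [L' /bdryP B'].
rewrite xpair_eqE negb_and /strong_prod /= => N /andP [/andP [_ H1] H2].
have o1 := ltn_ord i; have o2 := ltn_ord j; have o3 := ltn_ord i'.
have Hi : (i : nat) = i' \/ i.+1 = i' \/ i'.+1 = i.
  by case/orP: H2 => [/eqP -> | /orP [/eqP | /eqP]]; [left | right; left | right; right].
rewrite /dP /= /dd.
case: (eqVneq l l') => [Ell | Hll].
  subst l'.
  have Hij : (i : nat) != j by case/orP: N => [|/ord_neq]; rewrite ?eqxx.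
  have Ht : D l t' <= 1.
    case/orP: H1 => [/eqP <- | Et]; first by rewrite (T0 HTM).
    by case: (T1 HTM l Et); rewrite (T0 HTM) (Ts HTM t' l); plia.
  rewrite (T0 HTM); move/eqP: Hij; plia.
have Ht : D l' t' <= D l l'.
  case/orP: H1 => [/eqP <- | Et]; first by rewrite (Ts HTM).
  have := leaf_closer HTM L Hll Et; rewrite (Ts HTM l' t'); plia.
have P := Dpos Hll.
plia.
Qed.

Lemma corner_clique : clique (SR_rel E) Cor.
Proof.
apply/forallP => u; apply/implyP => Hu; apply/forallP => v; apply/implyP => Hv.
apply/implyP => Huv; rewrite /SR_rel Huv /MMD !corner_maxd //; by rewrite eq_sym.
Qed.

Lemma card_Cor : #|Cor| = 2 * #|leaves e|.
Proof.
have H0 : 0 < n by plia.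
have H1 : n.-1 < n by plia.
have -> : Cor = setX (leaves e) [set Ordinal H0; Ordinal H1].
  apply/setP => [[t i]]; rewrite !inE /= /bdry -!val_eqE /=.
  by [].
rewrite cardsX cards2 -val_eqE /=.
have -> : (0 != n.-1) = true by apply/eqP; plia.
by rewrite mulnC.
Qed.

Lemma ddC a b : dd a b = dd b a.
Proof. by rewrite /dd addnC. Qed.

Lemma ord_eq_nat (i j : 'I_n) : (i : nat) = j -> i = j.
Proof. exact: ord_inj. Qed.

Lemma gp_nbtw S : gp_set E S -> forall a m b, a \in S -> m \in S -> b \in S ->
  a != m -> m != b -> a != b -> ~ btw dP a m b.
Proof.
move=> HS a m b Ha Hm Hb H1 H2 H3 Hbt; apply: (HS a m b) => //.
exact: (btw_geod dP0 dPLip dPDesc Hbt).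
Qed.

Lemma gp_ub S : gp_set E S -> #|S| <= 2 * #|leaves e|.
Proof.
move=> HS; have NB := gp_nbtw HS.
pose Tp (u w : V * 'I_n) := dd u.2 w.2 <= D u.1 w.1.
pose Pp (u w : V * 'I_n) := D u.1 w.1 < dd u.2 w.2.
have Pside : forall u w1 w2, u \in S -> w1 \in S -> w2 \in S -> w1 != u -> w2 != u ->
    Pp u w1 -> Pp u w2 -> (w1.2 : nat) < u.2 -> (u.2 : nat) < w2.2 -> False.
  move=> [t i] [s1 j1] [s2 j2] Hu H1 H2 N1 N2; rewrite /Pp /= => P1 P2 L1 L2.
  apply: (NB (s1, j1) (t, i) (s2, j2)) => //; first by rewrite eq_sym.
    by rewrite xpair_eqE negb_and; apply/orP; right; apply/eqP => H; rewrite H in L1; plia.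
  have T := Ttri HTM Hcard s1 t s2.
  have := Ts HTM s1 t; have := Ts HTM t s2.
  rewrite /btw /dP /= /dd in P1 P2 *; plia.
have Tp_ne : forall u w, w != u -> Tp u w -> u.1 != w.1.
  move=> [t i] [s j]; rewrite /Tp /= => N Tw; apply/eqP => Ets; subst s.
  rewrite (T0 HTM) /dd in Tw.
  have Eij : j = i by apply: ord_inj; plia.
  by move: N; rewrite Eij eqxx.
have Tbranch : forall u w1 w2 x1 x2, u \in S -> w1 \in S -> w2 \in S -> w1 != u -> w2 != u ->
    Tp u w1 -> Tp u w2 -> e u.1 x1 -> (D x1 w1.1).+1 = D u.1 w1.1 ->
    e u.1 x2 -> (D x2 w2.1).+1 = D u.1 w2.1 -> x1 = x2.
  move=> [t i] [s1 j1] [s2 j2] x1 x2 Hu H1 H2 N1 N2; rewrite /Tp /= => P1 P2 E1 F1 E2 F2.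
  apply/eqP/negPn/negP => Hne.
  have Hb := branch' esymm HTM Hcard E1 F1 E2 F2 Hne.
  apply: (NB (s1, j1) (t, i) (s2, j2)) => //; first by rewrite eq_sym.
    rewrite xpair_eqE negb_and; apply/orP; left; apply/eqP => H.
    by rewrite H (T0 HTM) (Ts HTM s2 t) in Hb; plia.
  have := Ts HTM s1 t; have := Ts HTM t s2.
  rewrite /btw /dP /= /dd in P1 P2 *; plia.
pose Pl u l := (l \in leaves e) &&
  [forall w in S, ((w != u) && Tp u w) ==> (D l w.1 == D l u.1 + D u.1 w.1)].
have Pl_ex : forall u, u \in S -> exists l, Pl u l.
  move=> u Hu.
  case: (boolP (u.1 \in leaves e)) => Hl.
    exists u.1; rewrite /Pl Hl /=; apply/forallP => w; apply/implyP => _; apply/implyP => _.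
    by rewrite (T0 HTM).
  case: (boolP [exists w in S, (w != u) && Tp u w]).
    move=> /existsP [w0 /andP [Hw0 /andP [Hw0u Tw0]]].
    have Hts := Tp_ne _ _ Hw0u Tw0.
    have [x0 [E0 F0]] := T2 HTM Hts.
    have [x1 [E1 Hx10]] := nonleaf2 Hl E0.
    have [l [Hl' Fl]] := leaf_dir esymm HTM Hcard E1.
    exists l; rewrite /Pl Hl' /=; apply/forallP => w; apply/implyP => Hw; apply/implyP => /andP [Hwu Tw].
    have Hts' := Tp_ne _ _ Hwu Tw; have [xw [Ew Fw]] := T2 HTM Hts'.
    have Hxw : xw = x0 := Tbranch _ _ _ _ _ Hu Hw Hw0 Hwu Hw0u Tw Tw0 Ew Fw E0 F0.
    apply/eqP; apply: (branch' esymm HTM Hcard E1 Fl Ew Fw); by rewrite Hxw.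
  move=> Hno; have [l Hl'] := leaf_exists esymm HTM Hcard.
  exists l; rewrite /Pl Hl' /=; apply/forallP => w; apply/implyP => Hw; apply/implyP => Hwt.
  by exfalso; move/negP: Hno; apply; apply/existsP; exists w; rewrite Hw.
pose sig u := [exists w in S, (w != u) && Pp u w && ((u.2 : nat) < w.2)].
pose lf u := if [pick l | Pl u l] is Some l then l else u.1.
have lf_spec : forall u, u \in S -> Pl u (lf u).
  move=> u Hu; rewrite /lf; case: pickP => [l Hl | Hno] //.
  by exfalso; have [l Hl] := Pl_ex u Hu; rewrite Hno in Hl.
pose f u := (sig u, lf u).
have inj : {in S &, injective f}.
  move=> [t i] [s j] Hu Hw [Hs Hlf]; apply/eqP/negPn/negP => Hne.
  have Pu := lf_spec _ Hu; have Pw := lf_spec _ Hw.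
  rewrite Hlf in Pu; set l := lf (s, j) in Pu Pw.
  case: (leqP (dd i j) (D t s)) => Hc.
    have Hc' : Tp (s, j) (t, i) by rewrite /Tp /= (Ts HTM) ddC.
    move/andP: Pu => [_ /forallP /(_ (s, j))]; rewrite Hw /= => /implyP /(_ _) /eqP H1.
    move/andP: Pw => [_ /forallP /(_ (t, i))]; rewrite Hu /= => /implyP /(_ _) /eqP H2.
    have {}H1 := H1 (ltac:(by rewrite eq_sym Hne /Tp /=)).
    have {}H2 := H2 (ltac:(by rewrite Hne)).
    have Z : D t s = 0 by have := Ts HTM t s; plia.
    have Ets := Teq0 HTM Z; subst s.
    rewrite /dd in Hc; have Eij : i = j by apply: ord_inj; plia.
    by move/negP: Hne; apply; rewrite Eij.
  have Pw1 : Pp (s, j) (t, i) by rewrite /Pp /= (Ts HTM) ddC.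
  have Pu1 : Pp (t, i) (s, j) by [].
  case: (ltngtP (i : nat) j) => Hlt.
  - have Su : sig (t, i) by apply/existsP; exists (s, j); rewrite Hw eq_sym Hne /=; apply/andP.
    have Sw : ~~ sig (s, j).
      apply/negP => /existsP [w' /andP [Hw' /andP [/andP [Hw'w Pw'] Hlt']]].
      by apply: (Pside (s, j) (t, i) w' Hw Hu Hw' _ Hw'w Pw1 Pw' Hlt Hlt').
    by rewrite -Hs Su in Sw.
  - have Sw : sig (s, j) by apply/existsP; exists (t, i); rewrite Hu Hne /=; apply/andP.
    have Su : ~~ sig (t, i).
      apply/negP => /existsP [w' /andP [Hw' /andP [/andP [Hw'u Pw'] Hlt']]].
      by apply: (Pside (t, i) (s, j) w' Hu Hw Hw' _ Hw'u Pu1 Pw' Hlt Hlt'); rewrite eq_sym.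
    by rewrite Hs Sw in Su.
  - by move: Hc; rewrite /dd Hlt; plia.
rewrite -(card_in_imset inj).
have -> : 2 * #|leaves e| = #|setX [set: bool] (leaves e)| by rewrite cardsX cardsT card_bool.
apply: subset_leq_card; apply/subsetP => _ /imsetP [u Hu ->].
by rewrite in_setX in_setT /=; case/andP: (lf_spec u Hu).
Qed.

Lemma maxd_M1 t i s j : max_distant E (t, i) (s, j) ->
  (exists t', e t t' /\ D t' s = (D t s).+1) ->
  (exists i' : 'I_n, path_rel i i' /\ dd i' j = (dd i j).+1) -> False.
Proof.
move=> /forallP Hm [t' [Et Ft]] [i' [Hp Fi]].
have Eu : E (t, i) (t', i').
  apply: Eprod; [by rewrite Et orbT | by rewrite Hp orbT | apply/orP; left].
  by apply/eqP => H; rewrite H in Ft; plia.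
have := implyP (Hm (t', i')) Eu; rewrite !dist_E /dP /= (Ts HTM s t') (ddC j i') Ft Fi.
plia.
Qed.

Lemma maxd_M2 t i s j : max_distant E (t, i) (s, j) ->
  (exists t', e t t' /\ D t' s = (D t s).+1) -> D t s < dd i j.
Proof.
move=> /forallP Hm [t' [Et Ft]]; rewrite ltnNge; apply/negP => Hc.
have Eu : E (t, i) (t', i).
  apply: Eprod; [by rewrite Et orbT | by rewrite eqxx | apply/orP; left].
  by apply/eqP => H; rewrite H in Ft; plia.
have := implyP (Hm (t', i)) Eu; rewrite !dist_E /dP /= (Ts HTM s t') (ddC j i) Ft.
plia.
Qed.

Lemma maxd_M3 t i s j : max_distant E (t, i) (s, j) ->
  (exists i' : 'I_n, path_rel i i' /\ dd i' j = (dd i j).+1) -> dd i j < D t s.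
Proof.
move=> /forallP Hm [i' [Hp Fi]]; rewrite ltnNge; apply/negP => Hc.
have Eu : E (t, i) (t, i').
  apply: Eprod; [by rewrite eqxx | by rewrite Hp orbT | apply/orP; right].
  by apply/negP => /eqP H; move: (path_rel_neq Hp); rewrite H eqxx.
have := implyP (Hm (t, i')) Eu; rewrite !dist_E /dP /= (Ts HTM s t) (ddC j i') Fi.
plia.
Qed.

Lemma Pimp_of (i j : 'I_n) : (i : nat) = j \/ (0 < i /\ i < n.-1) ->
  exists i' : 'I_n, path_rel i i' /\ dd i' j = (dd i j).+1.
Proof.
move=> Hc; have o := ltn_ord i; have oj := ltn_ord j.
have H : ((j : nat) <= i /\ i.+1 < n) \/ ((i : nat) <= j /\ 0 < i) by plia.
case: H => [[H1 H2] | [H1 H2]].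
  by exists (Ordinal H2); rewrite /path_rel /= eqxx /dd; split => //; plia.
have H3 : i.-1 < n by plia.
exists (Ordinal H3); rewrite /path_rel /=; split.
  by apply/orP; right; apply/eqP; plia.
rewrite /dd /=; plia.
Qed.

Lemma sr_ub K : clique (SR_rel E) K -> #|K| <= 2 * #|leaves e|.
Proof.
move=> HK.
have [l0 Hl0] := leaf_exists esymm HTM Hcard.
have H0 : 0 < n by plia.
pose i0 := Ordinal H0.
pose g (u : V * 'I_n) := (if u.1 \in leaves e then u.1 else l0, if bdry u.2 then u.2 else i0).
have MM : forall u w, u \in K -> w \in K -> u != w -> max_distant E u w.
  move=> u w Hu Hw Huw; move/forallP: HK => /(_ u); rewrite Hu /= => /forallP /(_ w).
  by rewrite Hw Huw /= /SR_rel Huw /MMD /= => /andP [].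
have interior : forall k : 'I_n, ~~ bdry k -> 0 < k /\ k < n.-1.
  move=> k; rewrite /bdry negb_or => /andP [/eqP H1 /eqP H2]; have := ltn_ord k; plia.
have inj : {in K &, injective g}.
  move=> [t i] [s j] Hu Hw Hg; apply/eqP/negPn/negP => Hne.
  have M1 := MM _ _ Hu Hw Hne.
  have M2 := MM _ _ Hw Hu (ltac:(by rewrite eq_sym)).
  have NIu : t \notin leaves e -> bdry i.
    move=> Ht; apply/negPn/negP => /interior Hb.
    exact: (maxd_M1 M1 (Timp_of HTM Hcard (or_introl Ht)) (Pimp_of (or_intror Hb))).
  have NIw : s \notin leaves e -> bdry j.
    move=> Ht; apply/negPn/negP => /interior Hb.
    exact: (maxd_M1 M2 (Timp_of HTM Hcard (or_introl Ht)) (Pimp_of (or_intror Hb))).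
  have Tu : t \notin leaves e \/ t = s -> D t s < dd i j.
    by move=> H; apply: (maxd_M2 M1); apply: Timp_of.
  have Tw : s \notin leaves e \/ s = t -> D s t < dd j i.
    by move=> H; apply: (maxd_M2 M2); apply: Timp_of.
  have Pu : (i : nat) = j \/ (0 < i /\ i < n.-1) -> dd i j < D t s.
    by move=> H; apply: (maxd_M3 M1); apply: Pimp_of.
  have Pw : (j : nat) = i \/ (0 < j /\ j < n.-1) -> dd j i < D s t.
    by move=> H; apply: (maxd_M3 M2); apply: Pimp_of.
  case: Hg => Hg2 Hg1.
  have TS := Ts HTM t s; have DC := ddC i j.
  case: (boolP (t \in leaves e)) => Lt; case: (boolP (s \in leaves e)) => Ls.
  - rewrite Lt Ls in Hg2; subst s.
    have A := Tu (or_intror erefl); rewrite (T0 HTM) in A.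
    have Bi : bdry i.
      by apply/negPn/negP => /interior Hi; have := Pu (or_intror Hi); rewrite (T0 HTM).
    have Bj : bdry j.
      by apply/negPn/negP => /interior Hj; have := Pw (or_intror Hj); rewrite (T0 HTM).
    by rewrite Bi Bj in Hg1; rewrite Hg1 /dd in A; plia.
  - have Bj := NIw Ls; have A := Tw (or_introl Ls).
    case: (boolP (bdry i)) => Bi.
      by rewrite Bi Bj in Hg1; rewrite Hg1 /dd in A; plia.
    by have := Pu (or_intror (interior _ Bi)); plia.
  - have Bi := NIu Lt; have A := Tu (or_introl Lt).
    case: (boolP (bdry j)) => Bj.
      by rewrite Bi Bj in Hg1; rewrite Hg1 /dd in A; plia.
    by have := Pw (or_intror (interior _ Bj)); plia.
  - have Bi := NIu Lt; have Bj := NIw Ls; have A := Tu (or_introl Lt).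
    by rewrite Bi Bj in Hg1; rewrite Hg1 /dd in A; plia.
rewrite -(card_in_imset inj) -card_Cor.
apply: subset_leq_card; apply/subsetP => _ /imsetP [[t i] Hu ->].
rewrite CorP /=; apply/andP; split.
  by case: ifP.
by case: ifP => //; rewrite /bdry /= eqxx.
Qed.

End Prod.


Theorem proposition4p4 (V : finType) (e : rel V) (r n : nat) :
  simple_graph e -> in_family_T e ->
  #|leaves e| = 2 * r -> 2 <= n ->
  gp (strong_prod e (@path_rel n)) = 4 * r /\
  omega (SR_rel (strong_prod e (@path_rel n))) = 4 * r.
Proof.
move=> [esymm _] [k [_ Hst]] HL Hn.
have [D HTM] := stage_TM Hst.
have Hc := stage_card Hst; rewrite cardsT in Hc.
have Hcard : 1 < #|V| by apply: ltnW.
have -> : 4 * r = 2 * #|leaves e| by rewrite HL mulnA.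
split.
- apply/eqP; rewrite eqn_leq; apply/andP; split.
    by apply/bigmax_leqP => S /asboolP HS; exact: (gp_ub esymm HTM Hcard Hn HS).
  rewrite -(card_Cor e Hcard Hn); apply: leq_bigmax_cond; apply/asboolP.
  exact: (corner_gp HTM Hcard Hn).
- apply/eqP; rewrite eqn_leq; apply/andP; split.
    by apply/bigmax_leqP => S HS; exact: (sr_ub esymm HTM Hcard Hn HS).
  rewrite -(card_Cor e Hcard Hn); apply: leq_bigmax_cond.
  exact: (corner_clique HTM Hcard Hn).
Qed.
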